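(* Let $0\le a\le b\le n$ be integers with $a+b\le n$, and let $\varepsilon(a,b)$ be defined by $\mathbb E_{\mu_{ab}}[X]=\frac{a+b}{2}+\varepsilon(a,b)$, where $X$ has law $\mu_{ab}$. Then $\varepsilon(a,b)\ge0$. Moreover, $\varepsilon(a,b)\le\varepsilon(c,d)$ for any pair of integers $c,d$ with $c\le\min\{a,d\}\le\max\{a,d\}\le b$.
   Context: Fix $\beta>0$ and integer $n\ge1$. For integers $0\le a\le b\le n$, $\mu_{ab}$ is the probability distribution on $\{0,1,\dots,n\}$ given by $\mu_{ab}(j)=e^{-\beta(b-a)-2\beta(a-j)}/Z$ for $0\le j<a$, $\mu_{ab}(j)=e^{-\beta(b-a)}/Z$ for $a\le j\le b$, and $\mu_{ab}(j)=e^{-\beta(b-a)-2\beta(j-b)}/Z$ for $b<j\le n$, with $Z$ a normalizing constant. (This is the conditional law of the height at a site of the SOS model given that its two neighbouring heights have minimum $a$ and maximum $b$; i.e., the law of the new height after a column update.) For $c\le d$, $\varepsilon(c,d)$ is defined in the same way, $\varepsilon(c,d)=\mathbb E_{\mu_{cd}}[X]-\frac{c+d}2$. *)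

(* Defs.v *)
From Stdlib Require Import Reals Lra Lia Arith.
Open Scope R_scope.

Definition sos_weight (beta : R) (a b j : nat) : R :=
  if (j <? a)%nat then exp (- beta * (INR b - INR a) - 2 * beta * (INR a - INR j))
  else if (b <? j)%nat then exp (- beta * (INR b - INR a) - 2 * beta * (INR j - INR b))
  else exp (- beta * (INR b - INR a)).

(* Normalizing constant Z = sum_{j=0}^n weight j  (sum_f_R0 f n has n+1 terms). *)
Definition sos_Z (beta : R) (n a b : nat) : R :=
  sum_f_R0 (fun j => sos_weight beta a b j) n.

Definition mu (beta : R) (n a b j : nat) : R :=
  sos_weight beta a b j / sos_Z beta n a b.

Definition mu_mean (beta : R) (n a b : nat) : R :=
  sum_f_R0 (fun j => INR j * mu beta n a b j) n.

Definition eps (beta : R) (n c d : nat) : R :=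
  mu_mean beta n c d - (INR c + INR d) / 2.

(* Main.v *)
Require Import Defs.
From Stdlib Require Import Reals Lra Lia Arith Psatz.
Open Scope R_scope.
Lemma div_nonneg (a b : R) : 0 <= a -> 0 < b -> 0 <= a / b.
Proof. intros; unfold Rdiv; apply Rle_mult_inv_pos; auto. Qed.
Definition Ecf (x s L u Rr v : R) : R :=
  let y := 1 - x in
  let GL := x*(1-u)/y in let GR := x*(1-v)/y in
  let HL := x*(1-u-L*u*y)/(y*y) in let HR := x*(1-v-Rr*v*y)/(y*y) in
  (s/2*(GR-GL)+HR-HL)/(s+1+GL+GR).

Lemma key (x s L u Rr w : R) : 0 < x < 1 -> 0 < u <= 1 -> 0 < w <= 1 -> 0 <= s ->
  0 <= L -> 0 <= Rr ->
  Ecf x (s+1) L u Rr w <= Ecf x s L u (Rr+1) (x*w).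
Proof.
  intros Hx Hu Hw Hs HL HRr.
  unfold Ecf.
  set (y := 1 - x). set (v := x*w).
  assert (Hy : 0 < y) by (unfold y; lra).
  assert (Hv : 0 < v <= 1) by (unfold v; split; nra).
  assert (G1 : 0 <= x*(1-u)/y) by (apply div_nonneg; nra).
  assert (G2 : 0 <= x*(1-w)/y) by (apply div_nonneg; nra).
  assert (G3 : 0 <= x*(1-v)/y) by (apply div_nonneg; nra).
  set (Z1 := s+1+1 + x*(1-u)/y + x*(1-w)/y).
  set (Z2 := s+1 + x*(1-u)/y + x*(1-v)/y).
  assert (HZ1 : 0 < Z1) by (unfold Z1; lra).
  assert (HZ2 : 0 < Z2) by (unfold Z2; lra).
  set (cert := x*(v-u)^2+x*y*u*(1-u)+v*y*(1-x*u)*(1+2*(Rr+1))+2*x*L*u*y*(1-v)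
     +v*(y*y*(s*s+2*s)+2*s*x*(1-u)*y)+2*(Rr+1)*v*y*y*s).
  assert (Hc : 0 <= cert).
  { unfold cert.
    assert (0 <= x*(v-u)^2) by (apply Rmult_le_pos; [lra| apply pow2_ge_0]).
    assert (0 <= x*y*u*(1-u)) by (repeat apply Rmult_le_pos; lra).
    assert (0 <= 1 - x*u) by nra.
    assert (0 <= v*y*(1-x*u)*(1+2*(Rr+1))) by (repeat apply Rmult_le_pos; lra).
    assert (0 <= 2*x*L*u*y*(1-v)) by (repeat apply Rmult_le_pos; lra).
    assert (0 <= s*s+2*s) by nra.
    assert (0 <= v*(y*y*(s*s+2*s)+2*s*x*(1-u)*y)).
    { apply Rmult_le_pos; [lra|].
      assert (0 <= y*y*(s*s+2*s)) by (repeat apply Rmult_le_pos; lra).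
      assert (0 <= 2*s*x*(1-u)*y) by (repeat apply Rmult_le_pos; lra). lra. }
    assert (0 <= 2*(Rr+1)*v*y*y*s) by (repeat apply Rmult_le_pos; lra).
    lra. }
  match goal with |- ?A / ?B <= ?C / ?D => 
    assert (E : C/D - A/B = cert / (2*y*y*Z1*Z2)) end.
  { unfold cert, Z1, Z2, v, y. field. assert (0 < (s+1)*(1-x)) by nra. assert (0 < (s+1+1)*(1-x)) by nra. assert (0 <= x*(1-u)) by nra. assert (0 <= x*(1-x*w)) by nra. assert (0 <= x*(1-w)) by nra. repeat split; lra. }
  assert (0 <= cert / (2*y*y*Z1*Z2)).
  { apply div_nonneg; [lra|]. repeat apply Rmult_lt_0_compat; lra. }
  lra.
Qed.

Fixpoint sm (f : nat -> R) (k : nat) : R :=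
  match k with O => 0 | S k => sm f k + f k end.

Lemma sum_sm f n : sum_f_R0 f n = sm f (S n).
Proof. induction n; simpl; [lra|]. simpl in IHn. rewrite IHn. reflexivity. Qed.

Lemma sm_ext f g k : (forall i, (i < k)%nat -> f i = g i) -> sm f k = sm g k.
Proof. induction k; intros H; simpl; [reflexivity|]. rewrite IHk by (intros; apply H; lia).
  rewrite H by lia. reflexivity. Qed.

Lemma sm_add f a b : sm f (a + b) = sm f a + sm (fun i => f (a + i)%nat) b.
Proof. induction b; simpl. rewrite Nat.add_0_r; lra.
  rewrite Nat.add_succ_r. simpl. rewrite IHb. lra. Qed.

Lemma sm_left f k : sm f (S k) = f O + sm (fun i => f (S i)) k.
Proof. induction k; simpl. lra. simpl in IHk. rewrite IHk. lra. Qed.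

Lemma sm_plus f g k : sm (fun i => f i + g i) k = sm f k + sm g k.
Proof. induction k; simpl; lra. Qed.

Lemma sm_scal r f k : sm (fun i => r * f i) k = r * sm f k.
Proof. induction k; simpl; [lra|]. rewrite IHk. lra. Qed.

Lemma sm_div r f k : sm (fun i => f i / r) k = sm f k / r.
Proof. induction k; simpl. unfold Rdiv; lra. rewrite IHk. unfold Rdiv. lra. Qed.

Fixpoint Gs (x : R) (k : nat) : R :=
  match k with O => 0 | S k => Gs x k + x ^ (S k) end.
Fixpoint Hs (x : R) (k : nat) : R :=
  match k with O => 0 | S k => Hs x k + INR (S k) * x ^ (S k) end.

Lemma GsC x k : (1 - x) * Gs x k = x * (1 - x ^ k).
Proof. induction k; cbn [Gs]. simpl; ring.
  rewrite Rmult_plus_distr_l, IHk. simpl. ring. Qed.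

Lemma HsC x k : (1 - x) * (1 - x) * Hs x k = x * (1 - x ^ k - INR k * x ^ k * (1 - x)).
Proof. induction k; cbn [Hs]. simpl; ring.
  rewrite Rmult_plus_distr_l, IHk. rewrite S_INR. cbn [pow]. ring. Qed.

Lemma GsE x k : x <> 1 -> Gs x k = x * (1 - x ^ k) / (1 - x).
Proof. intros H. rewrite <- GsC. field. lra. Qed.

Lemma HsE x k : x <> 1 -> Hs x k = x * (1 - x ^ k - INR k * x ^ k * (1 - x)) / ((1 - x) * (1 - x)).
Proof. intros H. rewrite <- HsC. field. lra. Qed.

Lemma sm_Lw x c : sm (fun j => x ^ (c - j)) c = Gs x c.
Proof. induction c. reflexivity. rewrite sm_left. cbn [Gs]. rewrite <- IHc.
  rewrite Nat.sub_0_r. simpl (S c - S _)%nat. lra. Qed.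

Lemma sm_Lj x c : sm (fun j => INR j * x ^ (c - j)) c = INR c * Gs x c - Hs x c.
Proof. induction c. simpl; ring. rewrite sm_left. simpl (S c - S _)%nat.
  rewrite (sm_ext _ (fun i => INR i * x ^ (c - i) + x ^ (c - i))).
  2:{ intros i _. rewrite S_INR. ring. }
  rewrite sm_plus, IHc, sm_Lw. cbn [Gs]. cbn [Hs]. rewrite Nat.sub_0_r. rewrite S_INR. simpl. ring. Qed.

Lemma sm_Rw x k : sm (fun i => x ^ (S i)) k = Gs x k.
Proof. induction k; cbn [sm Gs]; [reflexivity|]. rewrite IHk. reflexivity. Qed.

Lemma sm_Rj x r k : sm (fun i => (r + INR (S i)) * x ^ (S i)) k = r * Gs x k + Hs x k.
Proof. induction k; cbn [sm Gs Hs]. ring. rewrite IHk. ring. Qed.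

Lemma sm_one k : sm (fun _ => 1) k = INR k.
Proof. induction k; simpl sm; [simpl; lra|]. rewrite IHk, S_INR. ring. Qed.

Lemma sm_id k : sm (fun i => INR i) k = INR k * (INR k - 1) / 2.
Proof. induction k; simpl sm; [simpl; lra|]. rewrite IHk, S_INR. field. Qed.

Lemma exp_nat t k : exp (INR k * t) = exp t ^ k.
Proof. induction k. simpl. rewrite Rmult_0_l, exp_0. reflexivity.
  rewrite S_INR, Rmult_plus_distr_r, Rmult_1_l, exp_plus, IHk. simpl. ring. Qed.
Lemma Gs_nonneg x k : 0 <= x -> 0 <= Gs x k.
Proof. intros Hx; induction k; cbn [Gs]; [lra|]. assert (0 <= x ^ S k) by (apply pow_le; lra). lra. Qed.

Lemma Hs_nonneg x k : 0 <= x -> 0 <= Hs x k.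
Proof. intros Hx; induction k; cbn [Hs]; [lra|].
  assert (0 <= x ^ S k) by (apply pow_le; lra). assert (0 <= INR (S k)) by apply pos_INR. nra. Qed.

Lemma Gs_mono x L k : 0 <= x -> Gs x L <= Gs x (L + k).
Proof. intros Hx; induction k. rewrite Nat.add_0_r; lra. rewrite Nat.add_succ_r. cbn [Gs].
  assert (0 <= x ^ S (L + k)) by (apply pow_le; lra). lra. Qed.

Lemma Hs_mono x L k : 0 <= x -> Hs x L <= Hs x (L + k).
Proof. intros Hx; induction k. rewrite Nat.add_0_r; lra. rewrite Nat.add_succ_r. cbn [Hs].
  assert (0 <= x ^ S (L + k)) by (apply pow_le; lra). assert (0 <= INR (S (L+k))) by apply pos_INR. nra. Qed.

Lemma w_left beta a b j : (j < a)%nat ->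
  sos_weight beta a b j = exp (- beta * (INR b - INR a)) * exp (-2*beta) ^ (a - j).
Proof. intros H. unfold sos_weight. rewrite (proj2 (Nat.ltb_lt _ _) H).
  rewrite <- exp_nat, <- exp_plus. f_equal. rewrite minus_INR by lia. ring. Qed.

Lemma w_mid beta a b j : (a <= j)%nat -> (j <= b)%nat ->
  sos_weight beta a b j = exp (- beta * (INR b - INR a)).
Proof. intros H1 H2. unfold sos_weight. rewrite (proj2 (Nat.ltb_ge _ _) H1).
  rewrite (proj2 (Nat.ltb_ge _ _) H2). reflexivity. Qed.

Lemma w_right beta a b j : (a <= b)%nat -> (b < j)%nat ->
  sos_weight beta a b j = exp (- beta * (INR b - INR a)) * exp (-2*beta) ^ (j - b).
Proof. intros H1 H2. unfold sos_weight. rewrite (proj2 (Nat.ltb_ge j a)) by lia.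
  rewrite (proj2 (Nat.ltb_lt _ _) H2).
  rewrite <- exp_nat, <- exp_plus. f_equal. rewrite minus_INR by lia. ring. Qed.

Definition epsS (x s : R) (L Rn : nat) : R :=
  (s/2*(Gs x Rn - Gs x L) + Hs x Rn - Hs x L) / (s + 1 + Gs x L + Gs x Rn).

Lemma eps_form beta n c d : (c <= d)%nat -> (d <= n)%nat ->
  eps beta n c d = epsS (exp (-2*beta)) (INR d - INR c) c (n - d).
Proof.
  intros Hcd Hdn.
  set (x := exp (-2*beta)). set (K := exp (- beta * (INR d - INR c))).
  set (s := (d - c)%nat). set (Rn := (n - d)%nat).
  assert (Hn : (S n = c + (S s + Rn))%nat) by (unfold s, Rn; lia).
  assert (Hx : 0 < x) by apply exp_pos. assert (HK : 0 < K) by apply exp_pos.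
  assert (HsI : INR s = INR d - INR c) by (unfold s; apply minus_INR; lia).
  assert (HZ : sos_Z beta n c d = K * (INR (S s) + Gs x c + Gs x Rn)).
  { unfold sos_Z. rewrite sum_sm, Hn, !sm_add.
    rewrite (sm_ext _ (fun j => K * x ^ (c - j))) by (intros; apply w_left; lia).
    rewrite (sm_ext (fun i => sos_weight beta c d (c + i)) (fun _ => K * 1))
      by (intros; rewrite Rmult_1_r; apply w_mid; unfold s in *; lia).
    rewrite (sm_ext (fun i => sos_weight beta c d (c + (S s + i))) (fun i => K * x ^ (S i))).
    2:{ intros i _. rewrite w_right by (unfold s; lia). fold K x. do 2 f_equal. unfold s; lia. }
    rewrite !sm_scal, sm_Lw, sm_one, sm_Rw. ring. }
  assert (HN : sm (fun j => INR j * sos_weight beta c d j) (S n) =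
     K * (INR c * Gs x c - Hs x c + (INR c * INR (S s) + INR (S s) * (INR (S s) - 1) / 2)
          + (INR d * Gs x Rn + Hs x Rn))).
  { rewrite Hn, !sm_add.
    rewrite (sm_ext _ (fun j => K * (INR j * x ^ (c - j)))).
    2:{ intros. rewrite w_left by lia. fold K x. ring. }
    rewrite (sm_ext (fun i => INR (c + i) * sos_weight beta c d (c + i))
       (fun i => K * (INR c * 1 + INR i))).
    2:{ intros. rewrite w_mid by (unfold s in *; lia). rewrite plus_INR. fold K. ring. }
    rewrite (sm_ext (fun i => INR (c + (S s + i)) * sos_weight beta c d (c + (S s + i)))
       (fun i => K * ((INR d + INR (S i)) * x ^ (S i)))).
    2:{ intros i _. rewrite w_right by (unfold s; lia). fold K x.
        replace (c + (S s + i) - d)%nat with (S i) by (unfold s; lia).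
        replace (c + (S s + i))%nat with (d + S i)%nat by (unfold s; lia).
        rewrite plus_INR. ring. }
    rewrite !sm_scal, sm_Lj, sm_plus, sm_scal, sm_one, sm_id, sm_Rj. ring. }
  unfold eps, mu_mean, mu.
  rewrite sum_sm.
  rewrite (sm_ext _ (fun j => INR j * sos_weight beta c d j / sos_Z beta n c d))
    by (intros; unfold Rdiv; ring).
  rewrite sm_div, HN, HZ. unfold epsS. fold x Rn.
  rewrite <- HsI. rewrite S_INR.
  assert (0 <= Gs x c) by (apply Gs_nonneg; lra).
  assert (0 <= Gs x Rn) by (apply Gs_nonneg; lra).
  assert (0 <= INR s) by apply pos_INR.
  replace (INR d) with (INR c + INR s) by lra.
  field. split; lra.
Qed.
Lemma pow_in x k : 0 < x < 1 -> 0 < x ^ k <= 1.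
Proof. intros H; induction k; simpl; [lra|]. split; nra. Qed.

Lemma epsS_Ecf x s L Rn : 0 < x < 1 ->
  epsS x s L Rn = Ecf x s (INR L) (x ^ L) (INR Rn) (x ^ Rn).
Proof. intros H. unfold epsS, Ecf. rewrite !GsE by lra. rewrite !HsE by lra. reflexivity. Qed.

Lemma refl_gen s GL GR HL HR : (s/2*(GR-GL)+HR-HL)/(s+1+GL+GR) = -((s/2*(GL-GR)+HL-HR)/(s+1+GR+GL)).
Proof. replace (s+1+GR+GL) with (s+1+GL+GR) by ring. unfold Rdiv. ring. Qed.

Lemma Ecf_refl x s L u Rr v : Ecf x s L u Rr v = - Ecf x s Rr v L u.
Proof. unfold Ecf. cbv zeta. apply refl_gen. Qed.

Lemma x_in beta : 0 < beta -> 0 < exp (-2*beta) < 1.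
Proof. intros H. split. apply exp_pos. rewrite <- exp_0. apply exp_increasing. lra. Qed.

Lemma stepD beta n c d : 0 < beta -> (c <= d)%nat -> (d < n)%nat ->
  eps beta n c (S d) <= eps beta n c d.
Proof.
  intros Hb H1 H2. pose proof (x_in beta Hb) as Hx. set (x := exp (-2*beta)) in *.
  rewrite !eps_form by lia. fold x. rewrite !epsS_Ecf by lra.
  replace (n - d)%nat with (S (n - S d)) by lia.
  rewrite S_INR. cbn [pow]. rewrite S_INR.
  replace (INR d + 1 - INR c) with ((INR d - INR c) + 1) by ring.
  apply key; try lra; try apply pow_in; try lra; try apply pos_INR.
  assert (INR c <= INR d) by (apply le_INR; lia); lra.
Qed.

Lemma stepC beta n c d : 0 < beta -> (c < d)%nat -> (d <= n)%nat ->
  eps beta n (S c) d <= eps beta n c d.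
Proof.
  intros Hb H1 H2. pose proof (x_in beta Hb) as Hx. set (x := exp (-2*beta)) in *.
  rewrite !eps_form by lia. fold x. rewrite !epsS_Ecf by lra.
  rewrite (Ecf_refl _ _ (INR (S c))), (Ecf_refl _ _ (INR c)).
  apply Ropp_le_contravar.
  rewrite S_INR. cbn [pow].
  replace (INR d - INR c) with ((INR d - (INR c + 1)) + 1) by ring.
  apply key; try lra; try apply pow_in; try lra; try apply pos_INR.
  assert (INR (S c) <= INR d) by (apply le_INR; lia). rewrite S_INR in *. lra.
Qed.

Lemma iterD beta n c d k : 0 < beta -> (c <= d)%nat -> (d + k <= n)%nat ->
  eps beta n c (d + k) <= eps beta n c d.
Proof. intros Hb H1. induction k; intros H2. rewrite Nat.add_0_r; lra.
  rewrite Nat.add_succ_r. eapply Rle_trans. apply stepD; auto; lia. apply IHk; lia. Qed.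

Lemma iterC beta n c b k : 0 < beta -> (c + k <= b)%nat -> (b <= n)%nat ->
  eps beta n (c + k) b <= eps beta n c b.
Proof. intros Hb. induction k; intros H1 H2. rewrite Nat.add_0_r; lra.
  rewrite Nat.add_succ_r. eapply Rle_trans. apply stepC; auto; lia. apply IHk; lia. Qed.

Theorem lemma3p2 (beta : R) (n a b : nat) :
  0 < beta -> (1 <= n)%nat ->
  (a <= b)%nat -> (b <= n)%nat -> (a + b <= n)%nat ->
  0 <= eps beta n a b /\
  (forall c d : nat,
      (c <= Nat.min a d)%nat -> (Nat.max a d <= b)%nat ->
      eps beta n a b <= eps beta n c d).
Proof.
  intros Hb Hn Hab Hbn Hsum. split.
  - pose proof (x_in beta Hb) as Hx. rewrite eps_form by lia. unfold epsS.
    set (x := exp (-2*beta)) in *.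
    replace (n - b)%nat with (a + (n - b - a))%nat by lia.
    pose proof (Gs_mono x a (n - b - a)). pose proof (Hs_mono x a (n - b - a)).
    pose proof (Gs_nonneg x a). pose proof (Gs_nonneg x (a + (n - b - a))).
    assert (INR a <= INR b) by (apply le_INR; lia).
    apply div_nonneg.
    + assert (0 <= (INR b - INR a)/2 * (Gs x (a + (n - b - a)) - Gs x a)).
      { apply Rmult_le_pos; lra. } lra.
    + lra.
  - intros c d H1 H2.
    eapply Rle_trans.
    + replace a with (c + (a - c))%nat at 1 by lia. apply iterC; auto; lia.
    + replace b with (d + (b - d))%nat by lia. apply iterD; auto; lia.
Qed.
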